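(* Let $(x,y,z)\in E$ be a $C$ or $D$ representation class that is not a $\mathrm{Pin}(2)$ representation class. Then there exists $\gamma\in\Gamma$ such that $\gamma(x,y,z)$ is $S$-equivalent to one of the triples $$(\sqrt2,1,\sqrt2),\ (1,1,1),\ (-2s,2s,2s),\ (-2s,-2s,1),\ (2r,-2r,-2r),\ (2r,1,2r),\ (1,2r,1),\ (1,2s,-1),\ (1,2r,2s),$$ where $r=\frac{\sqrt5+1}{4}$ and $s=\frac{\sqrt5-1}{4}$.
   Context: $M$ is a torus with one boundary component; $\pi_1(M)$ is free on $X,Y$. $E=\operatorname{Hom}(\pi_1(M),\mathrm{SU}(2))/\mathrm{SU}(2)$ is identified via global coordinates $[\sigma]\mapsto(\operatorname{tr}\sigma(X),\operatorname{tr}\sigma(Y),\operatorname{tr}\sigma(XY))$ with $\{(x,y,z)\in[-2,2]^3:-2\le x^2+y^2+z^2-xyz-2\le2\}$. $\Gamma$ (mapping class group of $M$ fixing $\partial M$) acts on $E$, generated by $\tau_X(x,y,z)=(x,z,xz-y)$ and $\tau_Y(x,y,z)=(z,y,yz-x)$. Let $p:\mathrm{SU}(2)\to\mathrm{SO}(3)$ be the double cover; $C=p^{-1}(\text{rotation group of the cube})$ and $D=p^{-1}(\text{rotation group of the regular dodecahedron})$. In the quaternionic model ($1,\mathrm{i},\mathrm{j},\mathrm{k}$ = $\begin{pmatrix}1&0\\0&1\end{pmatrix},\begin{pmatrix}i&0\\0&-i\end{pmatrix},\begin{pmatrix}0&1\\-1&0\end{pmatrix},\begin{pmatrix}0&i\\i&0\end{pmatrix}$),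 $\mathrm{Pin}(2)=p^{-1}(\mathrm{O}(2))=\{\cos\theta+\sin\theta\,\mathrm{j}\}\cup\{\cos\theta\,\mathrm{k}+\sin\theta\,\mathrm{i}\}$. For a subgroup $G\subset\mathrm{SU}(2)$, a point of $E$ is a $G$ representation class if some representative takes values in $G$ (equivalently, in a conjugate of $G$). Two triples are $S$-equivalent if one is obtained from the other by a permutation of coordinates combined with changing the signs of an even number of coordinates. *)

(* Defs.v *)
From Stdlib Require Import Reals List.
Import ListNotations.
Open Scope R_scope.

(* Quaternions a + b i + c j + d k.  In the matrix model of the paper,
   a + b i + c j + d k = [[a + b i, c + d i], [-c + d i, a - b i]], so
   SU(2) = unit quaternions and the trace is 2a. *)
Record quat := Q { q0 : R; q1 : R; q2 : R; q3 : R }.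

Definition qmul (p q : quat) : quat :=
  let '(Q a1 b1 c1 d1) := p in
  let '(Q a2 b2 c2 d2) := q in
  Q (a1*a2 - b1*b2 - c1*c2 - d1*d2)
    (a1*b2 + b1*a2 + c1*d2 - d1*c2)
    (a1*c2 - b1*d2 + c1*a2 + d1*b2)
    (a1*d2 + b1*c2 - c1*b2 + d1*a2).

Definition qconj (q : quat) : quat := Q (q0 q) (- q1 q) (- q2 q) (- q3 q).

Definition inSU2 (q : quat) : Prop :=
  q0 q ^ 2 + q1 q ^ 2 + q2 q ^ 2 + q3 q ^ 2 = 1.

Definition qtr (q : quat) : R := 2 * q0 q.

Definition rot (q : quat) (v : R * R * R) : R * R * R :=
  let '(v1, v2, v3) := v in
  let w := qmul (qmul q (Q 0 v1 v2 v3)) (qconj q) in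
  (q1 w, q2 w, q3 w).

Definition cube_vertex (v : R * R * R) : Prop :=
  let '(v1, v2, v3) := v in Rabs v1 = 1 /\ Rabs v2 = 1 /\ Rabs v3 = 1.

Definition phi : R := (1 + sqrt 5) / 2.

Definition dodec_vertex (v : R * R * R) : Prop :=
  let '(v1, v2, v3) := v in
     (Rabs v1 = 1 /\ Rabs v2 = 1 /\ Rabs v3 = 1)
  \/ (v1 = 0 /\ Rabs v2 = / phi /\ Rabs v3 = phi)
  \/ (Rabs v1 = / phi /\ Rabs v2 = phi /\ v3 = 0)
  \/ (Rabs v1 = phi /\ v2 = 0 /\ Rabs v3 = / phi).

Definition Cgrp (q : quat) : Prop :=
  inSU2 q /\ forall v, cube_vertex v -> cube_vertex (rot q v).

Definition Dgrp (q : quat) : Prop :=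
  inSU2 q /\ forall v, dodec_vertex v -> dodec_vertex (rot q v).

Definition Pin2 (q : quat) : Prop :=
  exists t : R, q = Q (cos t) 0 (sin t) 0 \/ q = Q 0 (sin t) 0 (cos t).

Definition in_E (t : R * R * R) : Prop :=
  let '(x, y, z) := t in
  -2 <= x <= 2 /\ -2 <= y <= 2 /\ -2 <= z <= 2 /\
  -2 <= x^2 + y^2 + z^2 - x*y*z - 2 <= 2.

(* (x,y,z) is a G representation class: some representation
   sigma : <X,Y> -> SU(2) with values in G has
   (tr sigma(X), tr sigma(Y), tr sigma(XY)) = (x,y,z). *)
Definition rep_class (G : quat -> Prop) (t : R * R * R) : Prop :=
  let '(x, y, z) := t in
  exists A B : quat, G A /\ G B /\
    qtr A = x /\ qtr B = y /\ qtr (qmul A B) = z.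

Inductive gen := tauX | tauXinv | tauY | tauYinv.

Definition act (g : gen) (t : R * R * R) : R * R * R :=
  let '(x, y, z) := t in
  match g with
  | tauX => (x, z, x*z - y)
  | tauXinv => (x, x*y - z, y)
  | tauY => (z, y, y*z - x)
  | tauYinv => (x*y - z, y, x)
  end.

Definition act_word (w : list gen) (t : R * R * R) : R * R * R :=
  fold_right act t w.

Inductive perm3 := p123 | p132 | p213 | p231 | p312 | p321.

Definition permute (s : perm3) (t : R * R * R) : R * R * R :=
  let '(x, y, z) := t in
  match s with
  | p123 => (x, y, z) | p132 => (x, z, y) | p213 => (y, x, z)
  | p231 => (y, z, x) | p312 => (z, x, y) | p321 => (z, y, x)
  end.

Definition S_equiv (t u : R * R * R) : Prop :=
  exists (s : perm3) (e1 e2 e3 : R),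
    (e1 = 1 \/ e1 = -1) /\ (e2 = 1 \/ e2 = -1) /\ (e3 = 1 \/ e3 = -1) /\
    e1 * e2 * e3 = 1 /\
    let '(a, b, c) := permute s t in u = (e1 * a, e2 * b, e3 * c).

Definition r5 : R := (sqrt 5 + 1) / 4.
Definition s5 : R := (sqrt 5 - 1) / 4.

Definition special_triples : list (R * R * R) :=
  [ (sqrt 2, 1, sqrt 2); (1, 1, 1); (-2*s5, 2*s5, 2*s5); (-2*s5, -2*s5, 1);
    (2*r5, -2*r5, -2*r5); (2*r5, 1, 2*r5); (1, 2*r5, 1); (1, 2*s5, -1);
    (1, 2*r5, 2*s5) ]%list.

(* Main.v *)
Require Import Defs.
From Stdlib Require Import Reals List QArith Qreals Lra Lia Psatz Bool.
Import ListNotations.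
Open Scope R_scope.


Record K := mkK { ka : Q; kb : Q }.
Definition kadd u v := mkK (Qred (ka u + ka v)) (Qred (kb u + kb v)).
Definition kopp u := mkK (- ka u)%Q (- kb u)%Q.
Definition ksub u v := kadd u (kopp v).
Definition kmul (d:Z) u v :=
  mkK (Qred (ka u * ka v + inject_Z d * kb u * kb v))
      (Qred (ka u * kb v + kb u * ka v)).
Definition interp (d:Z) u := Q2R (ka u) + Q2R (kb u) * sqrt (IZR d).

Lemma Q2R_red q : Q2R (Qred q) = Q2R q.
Proof. apply Qeq_eqR, Qred_correct. Qed.

Lemma Q2R_inj_Z z : Q2R (inject_Z z) = IZR z.
Proof. unfold Q2R; simpl; field. Qed.

Lemma interp_add d u v : interp d (kadd u v) = interp d u + interp d v.
Proof. unfold interp, kadd; cbn [ka kb]; rewrite !Q2R_red, !Q2R_plus; ring. Qed.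

Lemma interp_opp d u : interp d (kopp u) = - interp d u.
Proof. unfold interp, kopp; cbn [ka kb]; rewrite !Q2R_opp; ring. Qed.

Lemma interp_sub d u v : interp d (ksub u v) = interp d u - interp d v.
Proof. unfold ksub; rewrite interp_add, interp_opp; ring. Qed.

Lemma interp_mul d u v : (0 <= d)%Z -> interp d (kmul d u v) = interp d u * interp d v.
Proof.
  intro Hd. unfold interp, kmul; cbn [ka kb]; rewrite !Q2R_red, !Q2R_plus, !Q2R_mult, Q2R_inj_Z.
  assert (H : sqrt (IZR d) * sqrt (IZR d) = IZR d) by (apply sqrt_sqrt; apply IZR_le; lia).
  replace (Q2R (ka u) * Q2R (ka v) + IZR d * Q2R (kb u) * Q2R (kb v))
    with (Q2R (ka u) * Q2R (ka v) + sqrt (IZR d) * sqrt (IZR d) * Q2R (kb u) * Q2R (kb v)) by (rewrite H; ring).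
  ring.
Qed.

Definition keqb u v := (Qeq_bool (ka u) (ka v) && Qeq_bool (kb u) (kb v))%bool.

Lemma keqb_sound d u v : keqb u v = true -> interp d u = interp d v.
Proof.
  unfold keqb, interp; intro H; apply andb_prop in H; destruct H as [H1 H2].
  apply Qeq_bool_eq, Qeq_eqR in H1. apply Qeq_bool_eq, Qeq_eqR in H2.
  rewrite H1, H2; reflexivity.
Qed.

Definition kneqb (d:Z) u v :=
  let w := ksub u v in
  negb (Qeq_bool (ka w * ka w - inject_Z d * kb w * kb w) 0).

Lemma kneqb_sound d u v : (0 <= d)%Z -> kneqb d u v = true -> interp d u <> interp d v.
Proof.
  intros Hd H E. unfold kneqb in H.
  set (w := ksub u v) in H.
  assert (Hw : interp d w = 0) by (unfold w; rewrite interp_sub, E; ring).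
  unfold interp in Hw.
  assert (Hs : sqrt (IZR d) * sqrt (IZR d) = IZR d) by (apply sqrt_sqrt; apply IZR_le; lia).
  assert (Q2R (ka w * ka w - inject_Z d * kb w * kb w) = Q2R 0).
  { unfold Qminus. rewrite Q2R_plus, Q2R_opp, !Q2R_mult, Q2R_inj_Z.
    replace (Q2R (ka w)) with (- (Q2R (kb w) * sqrt (IZR d))) by lra.
    replace (Q2R 0) with 0 by (unfold Q2R; simpl; field).
    set (s := sqrt (IZR d)) in *. rewrite <- Hs. ring. }
  apply eqR_Qeq in H0. apply Qeq_eq_bool in H0. rewrite H0 in H. discriminate.
Qed.


Definition vlin (p U V W : R*R*R) : R*R*R :=
  let '(p1,p2,p3) := p in let '(u1,u2,u3) := U in
  let '(v1,v2,v3) := V in let '(w1,w2,w3) := W in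
  (p1*((u1+v1)/2) + p2*((u1+w1)/2) - p3*((v1+w1)/2),
   p1*((u2+v2)/2) + p2*((u2+w2)/2) - p3*((v2+w2)/2),
   p1*((u3+v3)/2) + p2*((u3+w3)/2) - p3*((v3+w3)/2)).

Definition vtr (U V W : R*R*R) : R :=
  let '(u1,u2,u3) := U in
  let '(v1,v2,v3) := V in let '(w1,w2,w3) := W in
  (u1+v1)/2 + (u2+w2)/2 - (v3+w3)/2.

Definition vdet (U V W : R*R*R) : R :=
  let '(u1,u2,u3) := U in
  let '(v1,v2,v3) := V in let '(w1,w2,w3) := W in
  u1*(v2*w3 - v3*w2) - v1*(u2*w3-u3*w2) + w1*(u2*v3-u3*v2).

Lemma rot_vlin a b c d p :
  rot (Defs.Q a b c d) p = vlin p (rot (Defs.Q a b c d) (1,1,1)) (rot (Defs.Q a b c d) (1,-1,-1)) (rot (Defs.Q a b c d) (-1,1,-1)).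
Proof. destruct p as [[x y] z]. simpl. f_equal; [f_equal|]; field. Qed.

Lemma rot_tr a b c d : vtr (rot (Defs.Q a b c d) (1,1,1)) (rot (Defs.Q a b c d) (1,-1,-1)) (rot (Defs.Q a b c d) (-1,1,-1))
   = 3*a^2 - b^2 - c^2 - d^2.
Proof. simpl. field. Qed.

Lemma rot_det a b c d : vdet (rot (Defs.Q a b c d) (1,1,1)) (rot (Defs.Q a b c d) (1,-1,-1)) (rot (Defs.Q a b c d) (-1,1,-1))
   = 4 * (a^2+b^2+c^2+d^2)^3.
Proof. simpl. ring. Qed.

Notation "a ||| b" := (if a then true else b) (at level 50, left associativity).
Lemma lor_prop (a b : bool) : (a ||| b) = true -> a = true \/ b = true.
Proof. destruct a; auto. Qed.
Fixpoint exb {A} (f : A -> bool) (l : list A) : bool :=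
  match l with nil => false | a :: l => if f a then true else exb f l end.
Fixpoint allb {A} (f : A -> bool) (l : list A) : bool :=
  match l with nil => true | a :: l => if f a then allb f l else false end.
Lemma exb_ex {A} (f : A -> bool) l : exb f l = true -> exists x, In x l /\ f x = true.
Proof. induction l as [|a l IH]; simpl; [discriminate|]. destruct (f a) eqn:E; intro H.
  - exists a; auto. - destruct (IH H) as [x [Hx Fx]]; exists x; auto. Qed.
Lemma allb_all {A} (f : A -> bool) l : allb f l = true -> forall x, In x l -> f x = true.
Proof. induction l as [|a l IH]; simpl; [tauto|]. destruct (f a) eqn:E; intros H x [<-|Hx]; auto; discriminate. Qed.

Definition K3 := (K * K * K)%type.
Definition i3 (d:Z) (u : K3) : R*R*R :=
  let '(a,b,c) := u in (interp d a, interp d b, interp d c).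
Definition kc (q:Q) := mkK q 0.
Lemma interp_kc d q : interp d (kc q) = Q2R q.
Proof. unfold interp, kc; cbn [ka kb]. unfold Q2R at 2; simpl; ring. Qed.
Lemma Q2R_half : Q2R (1#2) = /2.
Proof. unfold Q2R; simpl; field. Qed.

Section KOps.
Variable d : Z.
Local Notation "x + y" := (kadd x y).
Local Notation "x - y" := (ksub x y).
Local Notation "x * y" := (kmul d x y).
Local Notation h := (kc (1#2)).
Definition klin (p U V W : K3) : K3 :=
  let '(p1,p2,p3) := p in let '(u1,u2,u3) := U in
  let '(v1,v2,v3) := V in let '(w1,w2,w3) := W in
  (p1*((u1+v1)*h) + p2*((u1+w1)*h) - p3*((v1+w1)*h),
   p1*((u2+v2)*h) + p2*((u2+w2)*h) - p3*((v2+w2)*h),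
   p1*((u3+v3)*h) + p2*((u3+w3)*h) - p3*((v3+w3)*h)).
Definition ktr (U V W : K3) : K :=
  let '(u1,u2,u3) := U in
  let '(v1,v2,v3) := V in let '(w1,w2,w3) := W in
  (u1+v1)*h + (u2+w2)*h - (v3+w3)*h.
Definition kdet (U V W : K3) : K :=
  let '(u1,u2,u3) := U in
  let '(v1,v2,v3) := V in let '(w1,w2,w3) := W in
  u1*(v2*w3 - v3*w2) - v1*(u2*w3-u3*w2) + w1*(u2*v3-u3*v2).
End KOps.

Ltac kint Hd := repeat (rewrite ?interp_add, ?interp_sub, ?interp_opp, ?interp_kc, ?Q2R_half;
   try rewrite interp_mul by exact Hd).

Lemma klin_ok d p U V W : (0<=d)%Z -> i3 d (klin d p U V W) = vlin (i3 d p) (i3 d U) (i3 d V) (i3 d W).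
Proof.
  intro Hd; destruct p as [[p1 p2] p3], U as [[u1 u2] u3], V as [[v1 v2] v3], W as [[w1 w2] w3].
  simpl. kint Hd. reflexivity.
Qed.
Lemma ktr_ok d U V W : (0<=d)%Z -> interp d (ktr d U V W) = vtr (i3 d U) (i3 d V) (i3 d W).
Proof.
  intro Hd; destruct U as [[u1 u2] u3], V as [[v1 v2] v3], W as [[w1 w2] w3].
  simpl. kint Hd. field.
Qed.
Lemma kdet_ok d U V W : (0<=d)%Z -> interp d (kdet d U V W) = vdet (i3 d U) (i3 d V) (i3 d W).
Proof.
  intro Hd; destruct U as [[u1 u2] u3], V as [[v1 v2] v3], W as [[w1 w2] w3].
  simpl. kint Hd. ring.
Qed.

Definition kvneqb d (u v : K3) : bool :=
  let '(u1,u2,u3) := u in let '(v1,v2,v3) := v in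
  (kneqb d u1 v1 ||| kneqb d u2 v2 ||| kneqb d u3 v3).
Lemma kvneqb_sound d u v : (0<=d)%Z -> kvneqb d u v = true -> i3 d u <> i3 d v.
Proof.
  intros Hd; destruct u as [[u1 u2] u3], v as [[v1 v2] v3]; simpl.
  intros H E; inversion E.
  repeat (apply lor_prop in H; destruct H as [H|H]); eapply kneqb_sound in H; eauto.
Qed.

Definition kcheck d (Vl : list K3) (al : list K) (U V W : K3) : bool :=
  (exb (fun t => keqb (ktr d U V W) t) al
   ||| kneqb d (kdet d U V W) (kc 4)
   ||| exb (fun p => let ip := klin d p U V W in allb (fun c => kvneqb d ip c) Vl) Vl).

Lemma kcheck_sound d Vl al U V W : (0<=d)%Z -> kcheck d Vl al U V W = true ->
  vdet (i3 d U) (i3 d V) (i3 d W) = 4 ->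
  (forall p, In p Vl -> exists c, In c Vl /\ vlin (i3 d p) (i3 d U) (i3 d V) (i3 d W) = i3 d c) ->
  exists t, In t al /\ vtr (i3 d U) (i3 d V) (i3 d W) = interp d t.
Proof.
  intros Hd H Hdet Hl. unfold kcheck in H.
  apply lor_prop in H; destruct H as [H|H]; [apply lor_prop in H; destruct H as [H|H]|].
  - apply exb_ex in H. destruct H as [t [Ht H]]. exists t; split; auto.
    rewrite <- ktr_ok by auto. apply keqb_sound; auto.
  - exfalso. apply kneqb_sound in H; auto. apply H. rewrite kdet_ok, interp_kc by auto.
    rewrite Hdet. unfold Q2R; simpl; field.
  - exfalso. apply exb_ex in H. destruct H as [p [Hp H]].
    destruct (Hl p Hp) as [c [Hc E]]. 
    specialize (allb_all _ _ H c Hc) as H'. clear H; rename H' into H. apply kvneqb_sound in H; auto. apply H. rewrite klin_ok; auto.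
Qed.

Definition vdot (U V : R*R*R) : R :=
  let '(u1,u2,u3) := U in let '(v1,v2,v3) := V in u1*v1+u2*v2+u3*v3.
Definition kdot d (U V : K3) : K :=
  let '(u1,u2,u3) := U in let '(v1,v2,v3) := V in
  kadd (kadd (kmul d u1 v1) (kmul d u2 v2)) (kmul d u3 v3).
Lemma kdot_ok d U V : (0<=d)%Z -> interp d (kdot d U V) = vdot (i3 d U) (i3 d V).
Proof.
  intro Hd; destruct U as [[u1 u2] u3], V as [[v1 v2] v3].
  simpl. kint Hd. ring.
Qed.

Definition allcheck d Vl al : bool :=
  allb (fun U => allb (fun V =>
     (kneqb d (kdot d U V) (kc (-1)) |||
      allb (fun W => kneqb d (kdot d U W) (kc (-1)) ||| kcheck d Vl al U V W) Vl)) Vl) Vl.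

Lemma kc_m1 d : interp d (kc (-1)) = -1.
Proof. rewrite interp_kc; unfold Q2R; simpl; field. Qed.

Lemma allcheck_sound d Vl al : (0<=d)%Z -> allcheck d Vl al = true ->
  forall U V W, In U Vl -> In V Vl -> In W Vl ->
  vdot (i3 d U) (i3 d V) = -1 -> vdot (i3 d U) (i3 d W) = -1 ->
  vdet (i3 d U) (i3 d V) (i3 d W) = 4 ->
  (forall p, In p Vl -> exists c, In c Vl /\ vlin (i3 d p) (i3 d U) (i3 d V) (i3 d W) = i3 d c) ->
  exists t, In t al /\ vtr (i3 d U) (i3 d V) (i3 d W) = interp d t.
Proof.
  intros Hd H U V W HU HV HW D1 D2. unfold allcheck in H.
  specialize (allb_all _ _ H U HU) as H1; clear H.
  specialize (allb_all _ _ H1 V HV) as H; clear H1.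
  apply lor_prop in H; destruct H as [H|H].
  { exfalso. apply kneqb_sound in H; auto. apply H. rewrite kdot_ok, kc_m1 by auto. exact D1. }
  specialize (allb_all _ _ H W HW) as H1; clear H; rename H1 into H.
  apply lor_prop in H; destruct H as [H|H].
  { exfalso. apply kneqb_sound in H; auto. apply H. rewrite kdot_ok, kc_m1 by auto. exact D2. }
  apply kcheck_sound; auto.
Qed.

Lemma rot_dot a b c d x y : vdot (rot (Defs.Q a b c d) x) (rot (Defs.Q a b c d) y) = (a^2+b^2+c^2+d^2)^2 * vdot x y.
Proof. destruct x as [[x1 x2] x3], y as [[y1 y2] y3]. simpl. ring. Qed.


Definition kone := kc 1.
Definition kmone := kc (-1).
Definition kzero := kc 0.
Definition phiK := mkK (1#2) (1#2).
Definition mphiK := mkK (-1#2) (-1#2).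
Definition iphiK := mkK (-1#2) (1#2).
Definition miphiK := mkK (1#2) (-1#2).

Lemma i_one d : interp d kone = 1.
Proof. unfold kone; rewrite interp_kc; unfold Q2R; cbn [Qnum Qden]; field. Qed.
Lemma i_mone d : interp d kmone = -1.
Proof. unfold kmone; rewrite interp_kc; unfold Q2R; cbn [Qnum Qden]; field. Qed.
Lemma i_zero d : interp d kzero = 0.
Proof. unfold kzero; rewrite interp_kc; unfold Q2R; cbn [Qnum Qden]; field. Qed.

Lemma s5sq : sqrt 5 * sqrt 5 = 5.
Proof. apply sqrt_sqrt; lra. Qed.
Lemma s5pos : 2 < sqrt 5.
Proof. rewrite <- (sqrt_Rsqr 2) by lra. apply sqrt_lt_1; unfold Rsqr; lra. Qed.
Lemma s5lt : sqrt 5 < 3.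
Proof. rewrite <- (sqrt_Rsqr 3) by lra. apply sqrt_lt_1; unfold Rsqr; lra. Qed.

Lemma phi_val : phi = (1 + sqrt 5)/2.
Proof. reflexivity. Qed.
Lemma iphi_val : / phi = (sqrt 5 - 1)/2.
Proof. rewrite phi_val. pose proof s5sq; pose proof s5pos.
  assert (Hn: (1+sqrt 5)/2 <> 0) by lra.
  apply (Rmult_eq_reg_l ((1+sqrt 5)/2)); [| exact Hn]. rewrite Rinv_r by exact Hn. nra. Qed.

Lemma i_phi : interp 5 phiK = phi.
Proof. unfold interp, phiK, phi; cbn [ka kb]; unfold Q2R; cbn [Qnum Qden]; field. Qed.
Lemma i_mphi : interp 5 mphiK = - phi.
Proof. unfold interp, mphiK, phi; cbn [ka kb]; unfold Q2R; cbn [Qnum Qden]; field. Qed.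
Lemma i_iphi : interp 5 iphiK = / phi.
Proof. rewrite iphi_val; unfold interp, iphiK; cbn [ka kb]; unfold Q2R; cbn [Qnum Qden]; field. Qed.
Lemma i_miphi : interp 5 miphiK = - / phi.
Proof. rewrite iphi_val; unfold interp, miphiK; cbn [ka kb]; unfold Q2R; cbn [Qnum Qden]; field. Qed.

Lemma phi_pos : 0 < phi.
Proof. rewrite phi_val; pose proof s5pos; lra. Qed.
Lemma Rabs_phi : Rabs phi = phi.
Proof. apply Rabs_pos_eq; pose proof phi_pos; lra. Qed.
Lemma Rabs_iphi : Rabs (/phi) = /phi.
Proof. apply Rabs_pos_eq; pose proof phi_pos; left; apply Rinv_0_lt_compat; lra. Qed.

Lemma Rabs_cases x a : Rabs x = a -> x = a \/ x = - a.
Proof. unfold Rabs; destruct (Rcase_abs x); intros; [right|left]; lra. Qed.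

Definition cubeL : list K3 :=
  [ (kone,kone,kone); (kone,kone,kmone); (kone,kmone,kone); (kone,kmone,kmone);
    (kmone,kone,kone); (kmone,kone,kmone); (kmone,kmone,kone); (kmone,kmone,kmone) ].
Definition dodL : list K3 := cubeL ++
  [ (kzero,iphiK,phiK); (kzero,iphiK,mphiK); (kzero,miphiK,phiK); (kzero,miphiK,mphiK);
    (iphiK,phiK,kzero); (iphiK,mphiK,kzero); (miphiK,phiK,kzero); (miphiK,mphiK,kzero);
    (phiK,kzero,iphiK); (phiK,kzero,miphiK); (mphiK,kzero,iphiK); (mphiK,kzero,miphiK) ].

Ltac icode := first [ apply i_one | apply i_mone | apply i_zero
  | apply i_phi | apply i_mphi | apply i_iphi | apply i_miphi ].
Ltac findcode := refine (ex_intro _ (_,_,_) _); split; [ simpl; f_equal; [f_equal|]; icode | simpl; intuition reflexivity ].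

Lemma cube_code d v : cube_vertex v -> exists c, i3 d c = v /\ In c cubeL.
Proof.
  destruct v as [[v1 v2] v3]; simpl. intros [H1 [H2 H3]].
  apply Rabs_cases in H1; apply Rabs_cases in H2; apply Rabs_cases in H3.
  destruct H1 as [->| ->]; destruct H2 as [->| ->]; destruct H3 as [->| ->]; findcode.
Qed.

Lemma dod_code v : dodec_vertex v -> exists c, i3 5 c = v /\ In c dodL.
Proof.
  destruct v as [[v1 v2] v3]; simpl.
  intros [[H1 [H2 H3]]|[[H1 [H2 H3]]|[[H1 [H2 H3]]|[H1 [H2 H3]]]]];
  repeat match goal with H : Rabs _ = _ |- _ => apply Rabs_cases in H; destruct H as [->| ->] end;
  try subst; findcode.
Qed.


Definition alC : list K := [kc 3; kc 0; kc 1; kc (-1)].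
Definition alD : list K := [kc 3; kc (-1); kc 0; phiK; miphiK].

Lemma allC : allcheck 2 cubeL alC = true.
Proof. vm_cast_no_check (eq_refl true). Qed.
Lemma allD : allcheck 5 dodL alD = true.
Proof. vm_cast_no_check (eq_refl true). Qed.



Lemma Rabs_m1 : Rabs (-1) = 1.
Proof. rewrite Rabs_left; lra. Qed.
Ltac rabs := repeat first [ rewrite Rabs_Ropp | rewrite Rabs_R1 | rewrite Rabs_m1 | rewrite Rabs_phi | rewrite Rabs_iphi ].
Ltac rewi := repeat first [ rewrite i_one | rewrite i_mone | rewrite i_zero | rewrite i_phi
   | rewrite i_mphi | rewrite i_iphi | rewrite i_miphi ].

Lemma code_cube d c : In c cubeL -> cube_vertex (i3 d c).
Proof.
  unfold cubeL; simpl. intro H; repeat destruct H as [<-|H]; try contradiction; simpl; rewi; rabs; intuition reflexivity.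
Qed.

Lemma code_dod c : In c dodL -> dodec_vertex (i3 5 c).
Proof.
  unfold dodL, cubeL; simpl. intro H; repeat destruct H as [<-|H]; try contradiction; simpl; rewi; rabs;
  intuition reflexivity.
Qed.

Lemma grp_trace (vert : R*R*R -> Prop) d L al : (0 <= d)%Z -> allcheck d L al = true ->
  (forall c, In c L -> vert (i3 d c)) ->
  (forall v, vert v -> exists c, i3 d c = v /\ In c L) ->
  vert (1,1,1) -> vert (1,-1,-1) -> vert (-1,1,-1) ->
  forall q, inSU2 q -> (forall v, vert v -> vert (rot q v)) ->
  exists t, In t al /\ 4 * q0 q ^ 2 - 1 = interp d t.
Proof.
  intros Hd Hall Hcv Hvc V1 V2 V3 q Hq Hrot.
  destruct q as [a b c e]. unfold inSU2 in Hq; cbn [q0 q1 q2 q3] in Hq. cbn [q0].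
  destruct (Hvc _ (Hrot _ V1)) as [U [EU HU]].
  destruct (Hvc _ (Hrot _ V2)) as [V [EV HV]].
  destruct (Hvc _ (Hrot _ V3)) as [W [EW HW]].
  destruct (allcheck_sound d L al Hd Hall U V W HU HV HW) as [t [Ht Et]].
  - rewrite EU, EV, rot_dot, Hq. simpl. ring.
  - rewrite EU, EW, rot_dot, Hq. simpl. ring.
  - rewrite EU, EV, EW, rot_det, Hq. ring.
  - intros p Hp. rewrite EU, EV, EW, <- rot_vlin.
    destruct (Hvc _ (Hrot _ (Hcv p Hp))) as [c0 [E0 H0]]. exists c0; auto.
  - exists t; split; auto. rewrite <- Et, EU, EV, EW, rot_tr. nra.
Qed.

Lemma cube_trace q : Cgrp q -> exists t, In t alC /\ 4 * q0 q ^ 2 - 1 = interp 2 t.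
Proof.
  intros [Hq Hr]. eapply grp_trace; eauto.
  - lia.
  - exact allC.
  - apply code_cube.
  - apply cube_code.
  - simpl; rabs; auto.
  - simpl; rabs; auto.
  - simpl; rabs; auto.
Qed.

Lemma dod_trace q : Dgrp q -> exists t, In t alD /\ 4 * q0 q ^ 2 - 1 = interp 5 t.
Proof.
  intros [Hq Hr]. eapply grp_trace; eauto.
  - lia.
  - exact allD.
  - apply code_dod.
  - apply dod_code.
  - simpl; left; rabs; auto.
  - simpl; left; rabs; auto.
  - simpl; left; rabs; auto.
Qed.

Definition inT d (T : list K) x := exists k, In k T /\ interp d k = x.

Definition rootcheck d (al T : list K) : bool :=
  allb (fun t => exb (fun k1 => if keqb (kadd kone t) (kmul d k1 k1)
                                then exb (fun k2 => keqb k2 (kopp k1)) T else false) T) al.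

Lemma rootcheck_sound d al T : (0 <= d)%Z -> rootcheck d al T = true ->
  forall t x, In t al -> x * x = 1 + interp d t -> inT d T x.
Proof.
  intros Hd H t x Ht Hx. specialize (allb_all _ _ H t Ht) as H1.
  apply exb_ex in H1. destruct H1 as [k1 [Hk1 H1]].
  destruct (keqb (kadd kone t) (kmul d k1 k1)) eqn:E; [|discriminate].
  apply exb_ex in H1. destruct H1 as [k2 [Hk2 H2]].
  apply (keqb_sound d) in E. apply (keqb_sound d) in H2.
  rewrite interp_add, interp_mul, i_one in E by exact Hd. rewrite interp_opp in H2.
  assert (Hs : (x - interp d k1) * (x + interp d k1) = 0) by nra.
  apply Rmult_integral in Hs. destruct Hs as [Hs|Hs].
  - exists k1; split; auto; lra.
  - exists k2; split; auto; lra.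
Qed.

Definition TC : list K := [kc 2; kc (-2); kzero; kone; kmone; mkK 0 1; mkK 0 (-1)].
Definition TD : list K := [kc 2; kc (-2); kzero; kone; kmone; phiK; mphiK; iphiK; miphiK].

Lemma rootC : rootcheck 2 alC TC = true.
Proof. vm_compute. reflexivity. Qed.
Lemma rootD : rootcheck 5 alD TD = true.
Proof. vm_compute. reflexivity. Qed.

Lemma cube_tr q : Cgrp q -> inT 2 TC (qtr q).
Proof.
  intro H. destruct (cube_trace q H) as [t [Ht Et]].
  apply (rootcheck_sound 2 alC TC ltac:(lia) rootC t); auto.
  unfold qtr. lra.
Qed.
Lemma dod_tr q : Dgrp q -> inT 5 TD (qtr q).
Proof.
  intro H. destruct (dod_trace q H) as [t [Ht Et]].
  apply (rootcheck_sound 5 alD TD ltac:(lia) rootD t); auto.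
  unfold qtr. lra.
Qed.


Lemma qmul_SU2 p q : inSU2 p -> inSU2 q -> inSU2 (qmul p q).
Proof.
  destruct p as [a b c d], q as [e f g h]; unfold inSU2; cbn [q0 q1 q2 q3 qmul].
  intros H1 H2.
  transitivity ((a^2+b^2+c^2+d^2)*(e^2+f^2+g^2+h^2)); [ring|]. rewrite H1, H2; ring.
Qed.

Lemma rot_mul p q v : rot (qmul p q) v = rot p (rot q v).
Proof.
  destruct p as [a b c d], q as [e f g h], v as [[x y] z]. simpl. f_equal; [f_equal|]; ring.
Qed.

Lemma Cgrp_mul p q : Cgrp p -> Cgrp q -> Cgrp (qmul p q).
Proof. intros [H1 R1] [H2 R2]; split; [apply qmul_SU2; auto|]. intros v Hv; rewrite rot_mul; auto. Qed.
Lemma Dgrp_mul p q : Dgrp p -> Dgrp q -> Dgrp (qmul p q).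
Proof. intros [H1 R1] [H2 R2]; split; [apply qmul_SU2; auto|]. intros v Hv; rewrite rot_mul; auto. Qed.

Lemma tr_AAB A B : inSU2 A -> qtr (qmul A (qmul A B)) = qtr A * qtr (qmul A B) - qtr B.
Proof.
  destruct A as [a b c d], B as [e f g h]; unfold inSU2, qtr; cbn [q0 q1 q2 q3 qmul]. intro H.
  transitivity (2 * a * (2 * (a*e - b*f - c*g - d*h)) - 2 * e * (a^2+b^2+c^2+d^2)); [ring|].
  rewrite H; ring.
Qed.
Lemma tr_ABB A B : inSU2 B -> qtr (qmul (qmul A B) B) = qtr B * qtr (qmul A B) - qtr A.
Proof.
  destruct A as [a b c d], B as [e f g h]; unfold inSU2, qtr; cbn [q0 q1 q2 q3 qmul]. intro H.
  transitivity (2 * e * (2 * (a*e - b*f - c*g - d*h)) - 2 * a * (e^2+f^2+g^2+h^2)); [ring|].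
  rewrite H; ring.
Qed.
Lemma tr_BA A B : qtr (qmul B A) = qtr (qmul A B).
Proof. destruct A as [a b c d], B as [e f g h]; unfold qtr; cbn [q0 qmul]; ring. Qed.

Section RepClosure.
Variable G : quat -> Prop.
Hypothesis Gmul : forall p q, G p -> G q -> G (qmul p q).
Hypothesis Gunit : forall p, G p -> inSU2 p.

Lemma rep_tauX x y z : rep_class G (x,y,z) -> rep_class G (x, z, x*z - y).
Proof.
  intros [A [B [HA [HB [Ex [Ey Ez]]]]]]. exists A, (qmul A B).
  repeat split; auto. rewrite tr_AAB by auto. subst; reflexivity.
Qed.
Lemma rep_tauY x y z : rep_class G (x,y,z) -> rep_class G (z, y, y*z - x).
Proof.
  intros [A [B [HA [HB [Ex [Ey Ez]]]]]]. exists (qmul A B), B.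
  repeat split; auto. rewrite tr_ABB by auto. subst; reflexivity.
Qed.
Lemma rep_swap x y z : rep_class G (x,y,z) -> rep_class G (y, x, z).
Proof.
  intros [A [B [HA [HB [Ex [Ey Ez]]]]]]. exists B, A.
  repeat split; auto. rewrite tr_BA; auto.
Qed.
Lemma rep_inT d T : (forall q, G q -> inT d T (qtr q)) ->
  forall x y z, rep_class G (x,y,z) -> inT d T x /\ inT d T y /\ inT d T z.
Proof.
  intros HT x y z [A [B [HA [HB [Ex [Ey Ez]]]]]]. subst.
  repeat split; apply HT; auto.
Qed.
End RepClosure.


Definition kact d (g : gen) (t : K3) : K3 :=
  let '(x, y, z) := t in
  match g with
  | tauX => (x, z, ksub (kmul d x z) y)
  | tauXinv => (x, ksub (kmul d x y) z, y)
  | tauY => (z, y, ksub (kmul d y z) x)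
  | tauYinv => (ksub (kmul d x y) z, y, x)
  end.
Definition kact_word d (w : list gen) (t : K3) : K3 := fold_right (kact d) t w.
Definition kswap (t : K3) : K3 := let '(x,y,z) := t in (y,x,z).

Lemma kact_ok d g c : (0 <= d)%Z -> i3 d (kact d g c) = act g (i3 d c).
Proof.
  intro Hd. destruct c as [[x y] z]; destruct g; simpl; rewrite ?interp_sub, ?interp_mul by exact Hd; reflexivity.
Qed.
Lemma kact_word_ok d w c : (0 <= d)%Z -> i3 d (kact_word d w c) = act_word w (i3 d c).
Proof.
  intro Hd. induction w as [|g w IH]; simpl; auto. rewrite kact_ok by auto. rewrite IH. reflexivity.
Qed.

Definition notin1 d (T : list K) (k : K) : bool := allb (fun k' => kneqb d k k') T.
Definition notinT d T (c : K3) : bool :=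
  let '(x,y,z) := c in notin1 d T x ||| notin1 d T y ||| notin1 d T z.

Fixpoint kill d T (c : K3) (n : nat) : bool :=
  notinT d T c |||
  match n with
  | O => false
  | S n => kill d T (kact d tauX c) n ||| kill d T (kact d tauY c) n ||| kill d T (kswap c) n
  end.

Lemma notin1_sound d T k : (0 <= d)%Z -> notin1 d T k = true -> ~ inT d T (interp d k).
Proof.
  intros Hd H [k' [Hk' E]]. specialize (allb_all _ _ H k' Hk') as H1.
  apply kneqb_sound in H1; auto.
Qed.

Section Kill.
Variable d : Z.
Hypothesis Hd : (0 <= d)%Z.
Variable T : list K.
Variable P : R*R*R -> Prop.
Hypothesis PT : forall x y z, P (x,y,z) -> inT d T x /\ inT d T y /\ inT d T z.
Hypothesis PX : forall t, P t -> P (act tauX t).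
Hypothesis PY : forall t, P t -> P (act tauY t).
Hypothesis PS : forall x y z, P (x,y,z) -> P (y,x,z).

Lemma kill_sound n : forall c, kill d T c n = true -> ~ P (i3 d c).
Proof.
  induction n as [|n IH]; intros c H HP; simpl in H.
  - destruct c as [[x y] z]. simpl in H, HP. destruct (PT _ _ _ HP) as [H1 [H2 H3]].
    repeat (apply lor_prop in H; destruct H as [H|H]); try discriminate;
    eapply notin1_sound; eauto.
  - apply lor_prop in H; destruct H as [H|H].
    + destruct c as [[x y] z]. simpl in H, HP. destruct (PT _ _ _ HP) as [H1 [H2 H3]].
      repeat (apply lor_prop in H; destruct H as [H|H]); eapply notin1_sound; eauto.
    + repeat (apply lor_prop in H; destruct H as [H|H]).
      * apply (IH _ H). rewrite kact_ok by auto. auto.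
      * apply (IH _ H). rewrite kact_ok by auto. auto.
      * apply (IH _ H). destruct c as [[x y] z]. simpl in *. auto.
Qed.
End Kill.

Lemma Pin2_circ t : Pin2 (Defs.Q (cos t) 0 (sin t) 0).
Proof. exists t; left; reflexivity. Qed.
Lemma Pin2_other t : Pin2 (Defs.Q 0 (sin t) 0 (cos t)).
Proof. exists t; right; reflexivity. Qed.

Lemma pin2_rep x y z : in_E (x,y,z) ->
  (x^2 + y^2 + z^2 - x*y*z - 2 = 2 \/ (x = 0 /\ y = 0) \/ (x = 0 /\ z = 0) \/ (y = 0 /\ z = 0)) ->
  rep_class Pin2 (x,y,z).
Proof.
  intros [Hx [Hy [Hz _]]] H.
  destruct H as [H|[[-> ->]|[[-> ->]|[-> ->]]]].
  - set (a := acos (x/2)). set (b := acos (y/2)).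
    assert (ca : cos a = x/2) by (apply cos_acos; lra).
    assert (cb : cos b = y/2) by (apply cos_acos; lra).
    assert (sa : sin a ^2 = 1 - (x/2)^2) by (rewrite <- ca; pose proof (sin2_cos2 a); unfold Rsqr in *; nra).
    assert (sb : sin b ^2 = 1 - (y/2)^2) by (rewrite <- cb; pose proof (sin2_cos2 b); unfold Rsqr in *; nra).
    assert (Hp : (z - 2 * cos (a + b)) * (z - 2 * cos (a + - b)) = 0).
    { rewrite cos_plus, cos_plus, cos_neg, sin_neg, ca, cb.
      replace ((z - 2 * (x / 2 * (y / 2) - sin a * sin b)) * (z - 2 * (x / 2 * (y / 2) - sin a * - sin b)))
        with (z^2 - x*y*z + x^2*y^2/4 - 4 * (sin a ^2) * (sin b ^2)) by field.
      rewrite sa, sb. nra. }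
    apply Rmult_integral in Hp. destruct Hp as [Hp|Hp].
    + exists (Defs.Q (cos a) 0 (sin a) 0), (Defs.Q (cos b) 0 (sin b) 0).
      repeat split; try apply Pin2_circ; unfold qtr; cbn [q0 qmul].
      * lra. * lra. * rewrite cos_plus in Hp. lra.
    + exists (Defs.Q (cos a) 0 (sin a) 0), (Defs.Q (cos (-b)) 0 (sin (-b)) 0).
      repeat split; try apply Pin2_circ; unfold qtr; cbn [q0 qmul].
      * lra. * rewrite cos_neg; lra. * rewrite cos_plus in Hp. lra.
  - set (g := acos (- z/2)).
    assert (cg : cos g = - z/2) by (apply cos_acos; lra).
    exists (Defs.Q 0 (sin g) 0 (cos g)), (Defs.Q 0 (sin 0) 0 (cos 0)).
    repeat split; try apply Pin2_other; unfold qtr; cbn [q0 qmul].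
    * lra. * lra. * rewrite sin_0, cos_0, cg. lra.
  - set (b := acos (y/2)).
    assert (cb : cos b = y/2) by (apply cos_acos; lra).
    exists (Defs.Q 0 (sin 0) 0 (cos 0)), (Defs.Q (cos b) 0 (sin b) 0).
    repeat split; try apply Pin2_other; try apply Pin2_circ; unfold qtr; cbn [q0 qmul].
    * lra. * lra. * rewrite sin_0, cos_0. lra.
  - set (a := acos (x/2)).
    assert (ca : cos a = x/2) by (apply cos_acos; lra).
    exists (Defs.Q (cos a) 0 (sin a) 0), (Defs.Q 0 (sin 0) 0 (cos 0)).
    repeat split; try apply Pin2_other; try apply Pin2_circ; unfold qtr; cbn [q0 qmul].
    * lra. * lra. * rewrite sin_0, cos_0. lra.
Qed.

Definition kkappa d (c : K3) : K :=
  let '(x,y,z) := c in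
  ksub (kadd (kadd (kmul d x x) (kmul d y y)) (kmul d z z)) (kadd (kmul d (kmul d x y) z) (kc 2)).

Definition pin2b d (c : K3) : bool :=
  let '(x,y,z) := c in
  keqb (kkappa d c) (kc 2) ||| (keqb x kzero && keqb y kzero) ||| (keqb x kzero && keqb z kzero)
  ||| (keqb y kzero && keqb z kzero).

Lemma kc2 d : interp d (kc 2) = 2.
Proof. rewrite interp_kc; unfold Q2R; simpl; field. Qed.

Lemma pin2b_sound d c : (0 <= d)%Z -> pin2b d c = true -> in_E (i3 d c) -> rep_class Pin2 (i3 d c).
Proof.
  intros Hd H HE. destruct c as [[x y] z]. cbn [i3] in HE |- *. unfold pin2b in H. apply pin2_rep; auto.
  repeat (apply lor_prop in H; destruct H as [H|H]).
  - left. apply (keqb_sound d) in H. rewrite kc2 in H.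
    assert (E : interp d (kkappa d (x,y,z)) = interp d x ^ 2 + interp d y ^ 2 + interp d z ^ 2
       - interp d x * interp d y * interp d z - 2).
    { unfold kkappa. rewrite interp_sub, !interp_add, !interp_mul, kc2 by exact Hd. ring. }
    lra.
  - right; left. apply andb_prop in H; destruct H as [H1 H2].
    apply (keqb_sound d) in H1; apply (keqb_sound d) in H2. rewrite i_zero in *. auto.
  - right; right; left. apply andb_prop in H; destruct H as [H1 H2].
    apply (keqb_sound d) in H1; apply (keqb_sound d) in H2. rewrite i_zero in *. auto.
  - right; right; right. apply andb_prop in H; destruct H as [H1 H2].
    apply (keqb_sound d) in H1; apply (keqb_sound d) in H2. rewrite i_zero in *. auto.
Qed.

Definition kpermute (s : perm3) (t : K3) : K3 :=
  let '(x, y, z) := t in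
  match s with
  | p123 => (x, y, z) | p132 => (x, z, y) | p213 => (y, x, z)
  | p231 => (y, z, x) | p312 => (z, x, y) | p321 => (z, y, x)
  end.
Lemma kpermute_ok d s c : i3 d (kpermute s c) = permute s (i3 d c).
Proof. destruct c as [[x y] z]; destruct s; reflexivity. Qed.

Definition ksg (b : bool) (k : K) := if b then k else kopp k.
Definition rsg (b : bool) : R := if b then 1 else -1.
Lemma ksg_ok d b k : interp d (ksg b k) = rsg b * interp d k.
Proof. destruct b; simpl; rewrite ?interp_opp; ring. Qed.

Definition k3eqb (u v : K3) : bool :=
  let '(u1,u2,u3) := u in let '(v1,v2,v3) := v in
  keqb u1 v1 && keqb u2 v2 && keqb u3 v3.
Lemma k3eqb_sound d u v : k3eqb u v = true -> i3 d u = i3 d v.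
Proof.
  destruct u as [[u1 u2] u3], v as [[v1 v2] v3]; simpl. intro H.
  apply andb_prop in H; destruct H as [H H3]; apply andb_prop in H; destruct H as [H1 H2].
  rewrite (keqb_sound d _ _ H1), (keqb_sound d _ _ H2), (keqb_sound d _ _ H3). reflexivity.
Qed.

Definition words : list (list gen) := [[]; [tauX]; [tauXinv]; [tauY]; [tauYinv]].
Definition perms : list perm3 := [p123; p132; p213; p231; p312; p321].
Definition signs : list (bool*bool*bool) :=
  [(true,true,true); (true,false,false); (false,true,false); (false,false,true)].

Definition kapply_sg (e : bool*bool*bool) (c : K3) : K3 :=
  let '(b1,b2,b3) := e in let '(x,y,z) := c in (ksg b1 x, ksg b2 y, ksg b3 z).

Definition reachb d (spec : list K3) (c : K3) : bool :=
  exb (fun w => let c1 := kact_word d w c in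
    exb (fun s => let c2 := kpermute s c1 in
      exb (fun e => let c3 := kapply_sg e c2 in exb (fun sp => k3eqb sp c3) spec) signs) perms) words.

Lemma reachb_sound d spec c : (0 <= d)%Z -> reachb d spec c = true ->
  (forall sp, In sp spec -> exists u, In u special_triples /\ u = i3 d sp) ->
  exists (w : list gen) (t : R * R * R), In t special_triples /\ S_equiv (act_word w (i3 d c)) t.
Proof.
  intros Hd H Hsp. unfold reachb in H.
  apply exb_ex in H; destruct H as [w [_ H]].
  apply exb_ex in H; destruct H as [s [_ H]].
  apply exb_ex in H; destruct H as [e [He H]].
  apply exb_ex in H; destruct H as [sp [Hsp' H]].
  destruct (Hsp sp Hsp') as [u [Hu Eu]].
  exists w, u; split; auto.
  destruct e as [[b1 b2] b3].
  exists s, (rsg b1), (rsg b2), (rsg b3).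
  split; [destruct b1; simpl; auto|].
  split; [destruct b2; simpl; auto|].
  split; [destruct b3; simpl; auto|].
  split.
  { simpl in He. repeat destruct He as [He|He]; try contradiction; inversion He; subst; simpl; ring. }
  rewrite <- kact_word_ok by auto. rewrite <- kpermute_ok.
  apply (k3eqb_sound d) in H. rewrite Eu, H.
  destruct (kpermute s (kact_word d w c)) as [[x y] z]. simpl.
  rewrite !ksg_ok. reflexivity.
Qed.

Definition T3 (T : list K) : list K3 :=
  flat_map (fun x => flat_map (fun y => map (fun z => (x,y,z)) T) T) T.
Lemma T3_in T x y z : In x T -> In y T -> In z T -> In (x,y,z) (T3 T).
Proof.
  intros Hx Hy Hz. unfold T3. apply in_flat_map. exists x; split; auto.
  apply in_flat_map. exists y; split; auto. apply in_map; auto.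
Qed.

Definition final d T spec : bool :=
  allb (fun c => kill d T c 4 ||| pin2b d c ||| reachb d spec c) (T3 T).


Definition sq2K := mkK 0 1.
Definition specC : list K3 := [(sq2K, kone, sq2K); (kone, kone, kone)].
Definition specD : list K3 :=
  [ (kone,kone,kone); (miphiK, iphiK, iphiK); (miphiK, miphiK, kone); (phiK, mphiK, mphiK);
    (phiK, kone, phiK); (kone, phiK, kone); (kone, iphiK, kmone); (kone, phiK, iphiK) ].

Lemma i_sq2 : interp 2 sq2K = sqrt 2.
Proof. unfold interp, sq2K; cbn [ka kb]; unfold Q2R; simpl; field. Qed.
Lemma i_r 
  : interp 5 phiK = 2 * r5.
Proof. rewrite i_phi; unfold phi, r5; field. Qed.
Lemma i_mr : interp 5 mphiK = -2 * r5.
Proof. rewrite i_mphi; unfold phi, r5; field. Qed.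
Lemma i_s : interp 5 iphiK = 2 * s5.
Proof. rewrite i_iphi, iphi_val; unfold s5; field. Qed.
Lemma i_ms : interp 5 miphiK = -2 * s5.
Proof. rewrite i_miphi, iphi_val; unfold s5; field. Qed.

Ltac solve_in := simpl; repeat (first [left; reflexivity | right]).

Lemma specC_ok sp : In sp specC -> exists u, In u special_triples /\ u = i3 2 sp.
Proof.
  simpl. intros [<-|[<-|[]]].
  - exists (sqrt 2, 1, sqrt 2); split; [solve_in | cbn [i3]; rewrite i_sq2, i_one; reflexivity].
  - exists (1, 1, 1); split; [solve_in | cbn [i3]; rewrite i_one; reflexivity].
Qed.

Lemma specD_ok sp : In sp specD -> exists u, In u special_triples /\ u = i3 5 sp.
Proof.
  simpl. intro H; repeat destruct H as [<-|H]; try contradiction;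
  (eexists; split; [| cbn [i3]; rewrite ?i_one, ?i_mone, ?i_r, ?i_mr, ?i_s, ?i_ms; reflexivity]; solve_in).
Qed.

Lemma finalC : final 2 TC specC = true.
Proof. vm_cast_no_check (eq_refl true). Qed.
Lemma finalD : final 5 TD specD = true.
Proof. vm_cast_no_check (eq_refl true). Qed.


Lemma main_gen (G : quat -> Prop) d T spec :
  (0 <= d)%Z ->
  (forall p q, G p -> G q -> G (qmul p q)) ->
  (forall p, G p -> inSU2 p) ->
  (forall q, G q -> inT d T (qtr q)) ->
  final d T spec = true ->
  (forall sp, In sp spec -> exists u, In u special_triples /\ u = i3 d sp) ->
  forall x y z, in_E (x, y, z) -> rep_class G (x, y, z) -> ~ rep_class Pin2 (x, y, z) ->
  exists (w : list gen) (t : R * R * R),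
    In t special_triples /\ S_equiv (act_word w (x, y, z)) t.
Proof.
  intros Hd Gmul Gunit GT Hfin Hspec x y z HE HG HP.
  destruct (rep_inT G Gmul d T GT x y z HG) as [[kx [Hkx Ex]] [[ky [Hky Ey]] [kz [Hkz Ez]]]].
  subst x y z.
  specialize (allb_all _ _ Hfin (kx,ky,kz) (T3_in T kx ky kz Hkx Hky Hkz)) as H.
  change (interp d kx, interp d ky, interp d kz) with (i3 d (kx,ky,kz)) in *.
  apply lor_prop in H; destruct H as [H|H]; [apply lor_prop in H; destruct H as [H|H]|].
  - exfalso. apply (kill_sound d Hd T (rep_class G)) in H; auto.
    + intros x y z Hr. exact (rep_inT G Gmul d T GT x y z Hr).
    + intros [[x y] z] Hr. simpl. apply rep_tauX; auto.
    + intros [[x y] z] Hr. simpl. apply rep_tauY; auto.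
    + intros x y z Hr. apply rep_swap; auto.
  - exfalso. apply HP. apply pin2b_sound; auto.
  - apply reachb_sound with spec; auto.
Qed.

Theorem mainTheorem11 (x y z : R) :
  in_E (x, y, z) ->
  (rep_class Cgrp (x, y, z) \/ rep_class Dgrp (x, y, z)) ->
  ~ rep_class Pin2 (x, y, z) ->
  exists (w : list gen) (t : R * R * R),
    In t special_triples /\ S_equiv (act_word w (x, y, z)) t.
Proof.
  intros HE [HC|HD] HP.
  - exact (main_gen Cgrp 2 TC specC ltac:(lia) Cgrp_mul (fun p H => proj1 H) cube_tr finalC specC_ok x y z HE HC HP).
  - exact (main_gen Dgrp 5 TD specD ltac:(lia) Dgrp_mul (fun p H => proj1 H) dod_tr finalD specD_ok x y z HE HD HP).
Qed.
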